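(* Let $\gamma\in(0,1)$ and $c\ge 0$. Define the deterministic sequence $\bar v^0=0$ and, for $n\ge 1$, $$\hat v^n = c+\gamma \bar v^{n-1},\qquad \bar v^n=\Big(1-\tfrac1n\Big)\bar v^{n-1}+\tfrac1n \hat v^n .$$ Then for all $n=0,1,2,\dots$, $$\bar v^n \ \ge\ \frac{c}{1-\gamma}\Big(1-(n+1)^{-(1-\gamma)}\Big).$$
   Context: This is approximate value iteration for a single-state, single-action problem with deterministic one-period reward $c$, discount factor $\gamma$, initial approximation $0$, and stepsize $\alpha_{n-1}=1/n$. The true value is $c/(1-\gamma)$. *)

(* Defs.v *)
From Stdlib Require Import Reals.
Open Scope R_scope.

Definition vhat (c gamma vprev : R) : R := c + gamma * vprev.

Fixpoint vbar (c gamma : R) (n : nat) : R :=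
  match n with
  | O => 0
  | S m =>
      let k := INR (S m) in
      (1 - 1 / k) * vbar c gamma m + (1 / k) * vhat c gamma (vbar c gamma m)
  end.

(* Main.v *)
Require Import Defs.
From Stdlib Require Import Reals Lra.
Open Scope R_scope.

Lemma ln_le' x y : 0 < x -> x <= y -> ln x <= ln y.
Proof.
  intros Hx Hxy. destruct (Rle_lt_or_eq_dec _ _ Hxy) as [H|H].
  - left; apply ln_increasing; lra.
  - subst; lra.
Qed.

Lemma key (a n : R) : 0 < a -> 0 <= n ->
  exp (- a * ln (n + 1)) * (1 - a / (n + 1)) <= exp (- a * ln (n + 1 + 1)).
Proof.
  intros Ha Hn.
  set (y := Rinv (n + 1)).
  assert (Hy : y * (n + 1) = 1) by (unfold y; field; lra).
  assert (Hy0 : 0 < y) by (unfold y; apply Rinv_0_lt_compat; lra).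
  assert (Hd : ln (n + 1 + 1) <= ln (n + 1) + y).
  { replace (ln (n + 1) + y) with (ln ((n + 1) * exp y)) by (rewrite ln_mult, ln_exp; [reflexivity|lra|apply exp_pos]).
    apply ln_le'; [lra|].
    pose proof (exp_ineq1_le y). nra. }
  set (d := ln (n + 1 + 1) - ln (n + 1)).
  replace (- a * ln (n + 1 + 1)) with (- a * ln (n + 1) + - a * d) by (unfold d; ring).
  rewrite exp_plus.
  apply Rmult_le_compat_l; [left; apply exp_pos|].
  pose proof (exp_ineq1_le (- a * d)).
  assert (a / (n + 1) = a * y) by (unfold y, Rdiv; ring).
  assert (d <= y) by (unfold d; lra).
  nra.
Qed.

Theorem theorem1 (gamma c : R) (hg0 : 0 < gamma) (hg1 : gamma < 1) (hc : 0 <= c) :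
  forall n : nat,
    vbar c gamma n >= c / (1 - gamma) * (1 - Rpower (INR n + 1) (- (1 - gamma))).
Proof.
  set (a := 1 - gamma).
  assert (Ha : 0 < a) by (unfold a; lra).
  assert (Ha1 : a < 1) by (unfold a; lra).
  intro n. induction n as [|n IH].
  - simpl. unfold Rpower. replace (0 + 1) with 1 by ring. rewrite ln_1.
    rewrite Rmult_0_r, exp_0. lra.
  - apply Rle_ge. apply Rge_le in IH.
    pose proof (pos_INR n) as Hn.
    rewrite S_INR.
    unfold Rpower in *.
    pose proof (key a (INR n) Ha Hn) as K.
    replace (- (1 - gamma)) with (- a) by (unfold a; ring).
    replace (- (1 - gamma)) with (- a) in IH by (unfold a; ring).
    set (P := exp (- a * ln (INR n + 1))) in *.
    set (Q := exp (- a * ln (INR n + 1 + 1))) in *.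
    assert (VS : vbar c gamma (S n) = (1 - 1 / (INR n + 1)) * vbar c gamma n + 1 / (INR n + 1) * (c + gamma * vbar c gamma n)).
    { change (vbar c gamma (S n)) with ((1 - 1 / INR (S n)) * vbar c gamma n + (1 / INR (S n)) * vhat c gamma (vbar c gamma n)).
      rewrite S_INR. reflexivity. }
    rewrite VS.
    set (v := vbar c gamma n) in *.
    set (k := INR n + 1).
    assert (Hk : 0 < k) by (unfold k; lra).
    assert (E : (1 - 1 / k) * v + 1 / k * (c + gamma * v) = (1 - a / k) * v + c / k)
      by (unfold a; field; lra).
    rewrite E.
    assert (Hco : 0 <= 1 - a / k).
    { assert (a / k <= 1). { apply Rmult_le_reg_r with k; [lra|].
        unfold Rdiv. rewrite Rmult_assoc, Rinv_l by lra. unfold k; lra. }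
      lra. }
    fold k in K.
    assert (L1 : (1 - a / k) * (c / a * (1 - P)) <= (1 - a / k) * v)
      by (apply Rmult_le_compat_l; lra).
    assert (Hca : 0 <= c / a) by (unfold Rdiv; apply Rmult_le_pos; [lra| left; apply Rinv_0_lt_compat; lra]).
    assert (L2 : c / a * (P * (1 - a / k)) <= c / a * Q) by (apply Rmult_le_compat_l; lra).
    assert (E2 : (1 - a / k) * (c / a * (1 - P)) + c / k = c / a - c / a * (P * (1 - a / k)))
      by (field; lra).
    fold a. nra.
Qed.
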